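(* Let $\alpha=(\alpha_1,\ldots,\alpha_n)$ be a composition, $\sigma\in S_n$, and $i\in\{1,\ldots,n-1\}$ with $\alpha_i=\alpha_{i+1}$. Let $T\in\mathrm{NAF}(\alpha,\sigma)$ and let $U=\Omega_{0,h}(T)$ for some $h\in\{0,\ldots,\alpha_i\}$, and suppose $U$ is non-attacking. Then $$\mathrm{wt}_{h}(U)\,(1-\rho_h(U))=\mathrm{wt}_{h}(T)\,(1-\rho_h(T)).$$
   Context: Permutations are in one-line notation; $\sigma s_i$ is $\sigma$ with the entries in positions $i,i+1$ exchanged. A composition is a sequence of nonnegative integers. The skyline diagram is $\mathrm{dg}(\alpha)=\{(j,r):1\le j\le n,\ 1\le r\le\alpha_j\}$ ($j$ = column, $r$ = row) and the augmented diagram is $\mathrm{adg}(\alpha)=\mathrm{dg}(\alpha)\cup\{(j,0):1\le j\le n\}$ (row $0$ is the basement). For $u=(j,r)\in\mathrm{dg}(\alpha)$: $\mathrm{south}(u)=(j,r-1)$; $\mathrm{leg}(u)=\alpha_j-r$; the left arm set is $\{(j',r-1)\in\mathrm{adg}(\alpha):j'<j,\ \alpha_{j'}<\alpha_j\}$, the right arm set is $\{(j',r)\in\mathrm{dg}(\alpha):j'>j,\ \alpha_{j'}\le\alpha_j\}$, $\mathrm{Arm}(u)$ is their union and $\mathrm{arm}(u)=|\mathrm{Arm}(u)|$. Two boxes of $\mathrm{adg}(\alpha)$ attack each other if they are in the same row, or in consecutive rows with the box in the higher row strictly to the right of the box in the lower row. A filling of shape $\alpha$ and basement $\tau\in S_n$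 is a map $T:\mathrm{adg}(\alpha)\to\{1,\ldots,n\}$ with $T(j,0)=\tau_j$; $\mathrm{NAF}(\alpha,\tau)$ is the set of non-attacking ones (attacking boxes have distinct entries). For integers $a,b$ let $\chi(a,b)=1$ if $a>b$ and $0$ otherwise, and $\chi(a,b,c)=\chi(a,b)+\chi(b,c)-\chi(a,c)$. For a non-attacking filling $T$: a descent is $u\in\mathrm{dg}(\alpha)$ with $T(u)>T(\mathrm{south}(u))$; a triple is $(u,v,w)$ with $u\in\mathrm{dg}(\alpha)$, $w=\mathrm{south}(u)$, $v\in\mathrm{Arm}(u)$, an inversion triple if $\chi(T(u),T(v),T(w))=1$ and a coinversion triple otherwise. For $r\ge0$, let $\mathrm{maj}_{r+1}(T)=\sum(\mathrm{leg}(u)+1)$ over descents $u$ in row $r+1$, let $\mathrm{coinv}_{r,r+1}(T)$ be the number of coinversion triples $(u,v,w)$ with $u$ in row $r+1$, and $\mathrm{wt}_r(T)=q^{\mathrm{maj}_{r+1}(T)}t^{\mathrm{coinv}_{r,r+1}(T)}\prod_{u\in\mathrm{dg}(\alpha)\text{ in row }r+1,\ T(u)\ne T(\mathrm{south}(u))}\frac{1-t}{1-q^{1+\mathrm{leg}(u)}t^{1+\mathrm{arm}(u)}}$ (empty sums are $0$, empty products $1$). Fix $i$ with $\alpha_i=\alpha_{i+1}$. For a filling $T$ and $0\le r\le\alpha_i$, $\mathrm{swap}_r(T)$ exchanges the entries of boxes $(i,r)$ and $(i+1,r)$, and $\Omega_{0,h}=\mathrm{swap}_h\circ\cdots\circ\mathrm{swap}_0$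 (so $\Omega_{0,h}(T)$ has basement $\sigma s_i$). For a non-attacking filling $T$ (any basement) and $0\le r\le\alpha_i-1$, let $a=T(i,r)$, $b=T(i+1,r)$, $c=T(i,r+1)$, $d=T(i+1,r+1)$, $A=\mathrm{arm}(i+1,r+1)$, $\ell=\mathrm{leg}(i+1,r+1)$, and define $\rho_r(T)\in\mathbb{Q}(q,t)$: if $a,b,c,d$ are distinct, $\rho_r(T)=0$ when $\chi(c,d,a)=\chi(c,d,b)$ and $\rho_r(T)=1$ when $\chi(c,d,a)=\chi(d,c,b)$; if exactly three of them are distinct, then $\rho_r(T)=0$ if $b=c$, $\rho_r(T)=1$ if $b=d$, and $\rho_r(T)=t^{1-\chi(d,a,b)}\frac{1-q^{\ell+1}t^{A+1}}{1-q^{\ell+1}t^{A+2}}$ if $a=c$; if $a=c$ and $b=d$, $\rho_r(T)=1$. By convention $\rho_{\alpha_i}(T)=0$. *)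

(* Defs.v *)
From HB Require Import structures.
From mathcomp Require Import all_boot all_order all_algebra.
From mathcomp Require Import fraction.
Set Implicit Arguments. Unset Strict Implicit. Unset Printing Implicit Defensive.
Import Order.TTheory GRing.Theory Num.Theory.

(* Conventions: a composition is alpha : seq nat, n = size alpha; columns
   are 1..n (alpha_j = nth 0 alpha (j-1)); rows r >= 0, row 0 = basement.
   A filling is a function T : nat -> nat -> nat, T j r = entry of box (j,r)
   (values outside adg(alpha) are irrelevant).  Permutations in one-line
   notation are sequences perm_eq to [:: 1; ...; n]. *)

Definition ncol (alpha : seq nat) := size alpha.
Definition acol (alpha : seq nat) (j : nat) := nth 0 alpha j.-1.

Definition in_dg alpha (j r : nat) :=
  [&& 1 <= j, j <= ncol alpha, 1 <= r & r <= acol alpha j].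
Definition in_adg alpha (j r : nat) :=
  [&& 1 <= j, j <= ncol alpha & r <= acol alpha j].

Definition leg alpha (j r : nat) : nat := acol alpha j - r.

Definition left_arm alpha (j r : nat) : seq (nat * nat) :=
  [seq (j', r.-1) | j' <- iota 1 j.-1 &
     in_adg alpha j' r.-1 && (acol alpha j' < acol alpha j)].
Definition right_arm alpha (j r : nat) : seq (nat * nat) :=
  [seq (j', r) | j' <- iota j.+1 (ncol alpha - j) &
     in_dg alpha j' r && (acol alpha j' <= acol alpha j)].
Definition Arm alpha j r := left_arm alpha j r ++ right_arm alpha j r.
Definition arm alpha j r : nat := size (Arm alpha j r).

Definition attack (u v : nat * nat) : bool :=
  [|| (u.2 == v.2) && (u.1 != v.1),
      (v.2 == u.2.+1) && (u.1 < v.1) |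
      (u.2 == v.2.+1) && (v.1 < u.1)].

Definition filling alpha (tau : seq nat) (T : nat -> nat -> nat) : Prop :=
  (forall j, 1 <= j <= ncol alpha -> T j 0 = nth 0 tau j.-1) /\
  (forall j r, in_adg alpha j r -> 1 <= T j r <= ncol alpha).

Definition nonattacking alpha (T : nat -> nat -> nat) : Prop :=
  forall j1 r1 j2 r2, in_adg alpha j1 r1 -> in_adg alpha j2 r2 ->
    attack (j1, r1) (j2, r2) -> T j1 r1 <> T j2 r2.

Definition NAF alpha tau T : Prop := filling alpha tau T /\ nonattacking alpha T.

Definition is_perm (n : nat) (s : seq nat) : bool := perm_eq s (iota 1 n).

(* sigma s_i : exchange positions i, i+1 (1-indexed) *)
Definition perm_si (s : seq nat) (i : nat) : seq nat :=
  [seq (if k == i then nth 0 s i else if k == i.+1 then nth 0 s i.-1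
        else nth 0 s k.-1) | k <- iota 1 (size s)].

Definition swap_row (i r : nat) (T : nat -> nat -> nat) : nat -> nat -> nat :=
  fun j r' => if r' == r then
                (if j == i then T i.+1 r else if j == i.+1 then T i r else T j r')
              else T j r'.
Fixpoint Omega (i h : nat) (T : nat -> nat -> nat) : nat -> nat -> nat :=
  match h with
  | 0 => swap_row i 0 T
  | h'.+1 => swap_row i h'.+1 (Omega i h' T)
  end.

Definition chi2 (a b : nat) : int := (a > b)%N%:Z.
Definition chi3 (a b c : nat) : int := (chi2 a b + chi2 b c - chi2 a c)%R.

Definition QqtR := {poly {poly rat}}.
Definition Qqt := {fraction QqtR}.
Definition qq : Qqt := @FracField.tofrac QqtR (('X : {poly rat})%:P).
Definition tt : Qqt := @FracField.tofrac QqtR 'X.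

Local Open Scope ring_scope.

(* boxes of dg(alpha) in row r+1 are (j, r+1), 1 <= j <= n *)
Definition row_cols alpha (r : nat) : seq nat :=
  [seq j <- iota 1 (ncol alpha) | in_dg alpha j r.+1].

Definition maj_row alpha (T : nat -> nat -> nat) (r : nat) : nat :=
  \sum_(j <- row_cols alpha r | (T j r.+1 > T j r)%N) (leg alpha j r.+1).+1.

Definition coinv_row alpha (T : nat -> nat -> nat) (r : nat) : nat :=
  \sum_(j <- row_cols alpha r)
     count (fun v : nat * nat => chi3 (T j r.+1) (T v.1 v.2) (T j r) != 1)
           (Arm alpha j r.+1).

Definition wt alpha (T : nat -> nat -> nat) (r : nat) : Qqt :=
  qq ^+ maj_row alpha T r * tt ^+ coinv_row alpha T r *
  \prod_(j <- row_cols alpha r | T j r.+1 != T j r)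
     ((1 - tt) / (1 - qq ^+ (1 + leg alpha j r.+1) * tt ^+ (1 + arm alpha j r.+1))).

Definition rho alpha (i : nat) (T : nat -> nat -> nat) (r : nat) : Qqt :=
  if (r >= acol alpha i)%N then 0 else
  let a := T i r in let b := T i.+1 r in
  let c := T i r.+1 in let d := T i.+1 r.+1 in
  let A := arm alpha i.+1 r.+1 in let l := leg alpha i.+1 r.+1 in
  if (a == c) && (b == d) then 1
  else if b == c then 0
  else if b == d then 1
  else if a == c then
    tt ^ (1 - chi3 d a b) *
    ((1 - qq ^+ l.+1 * tt ^+ A.+1) / (1 - qq ^+ l.+1 * tt ^+ A.+2))
  else (* a, b, c, d distinct *)
    if chi3 c d a == chi3 c d b then 0 else 1.

(* Main.v *)
Require Import Defs.
From HB Require Import structures.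
From mathcomp Require Import all_boot all_order all_algebra.
From mathcomp Require Import fraction.
From mathcomp Require Import zify ring lra.
Import GRing.Theory.
Local Open Scope ring_scope.

Definition sw (i j : nat) : nat := if j == i then i.+1 else if j == i.+1 then i else j.

Lemma Omega_eq i h T j r : Omega i h T j r = if (r <= h)%N then T (sw i j) r else T j r.
Proof.
elim: h j r => [|h IH] j r /=; rewrite /swap_row /sw.
  case: r => [|r] //=.
  by case: (j =P i) => // _; case: (j =P i.+1).
case: (r =P h.+1) => [->|/eqP hr].
  rewrite leqnn; case: (j =P i) => _; first by rewrite IH ltnn.
  by case: (j =P i.+1) => _; rewrite ?IH ?ltnn.
rewrite IH; have -> : (r <= h.+1)%N = (r <= h)%N by rewrite leq_eqVlt (negbTE hr).
done.
Qed.

Lemma chi3_01 x y z : (y != x)%N -> (y != z)%N -> (chi3 x y z == 0) || (chi3 x y z == 1).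
Proof. rewrite /chi3 /chi2 => ? ?. lia. Qed.

Lemma chi3_key x y z w : (y != z)%N -> (1 - chi3 x y z) + (1 - chi3 z y w) - (1 - chi3 x y w) = chi3 x z w.
Proof. rewrite /chi3 /chi2 => ?. lia. Qed.

Definition W alpha (T : nat -> nat -> nat) h j : Qqt :=
  qq ^+ (if (T j h.+1 > T j h)%N then (leg alpha j h.+1).+1 else 0) *
  tt ^+ (count (fun v : nat * nat => chi3 (T j h.+1) (T v.1 v.2) (T j h) != 1) (Arm alpha j h.+1)) *
  (if T j h.+1 != T j h then
     ((1 - tt) / (1 - qq ^+ (1 + leg alpha j h.+1) * tt ^+ (1 + arm alpha j h.+1))) else 1).

Lemma wt_prod alpha T h : wt alpha T h = \prod_(j <- row_cols alpha h) W alpha T h j.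
Proof.
rewrite /W !big_split /= /wt /maj_row /coinv_row.
rewrite (big_morph (fun n => qq ^+ n) (exprD qq) (expr0 qq)).
rewrite (big_morph (fun n => tt ^+ n) (exprD tt) (expr0 tt)).
rewrite big_mkcond [X in _ * _ * X = _]big_mkcond /=.
congr (_ * _ * _); apply: eq_bigr => j _; by case: ifP.
Qed.

Definition swv i h (v : nat * nat) : nat * nat := (if (v.2 <= h)%N then sw i v.1 else v.1, v.2).

Lemma sw_inv i x : sw i (sw i x) = x.
Proof.
rewrite /sw; case: (x =P i) => [->|hi]; first by rewrite eqxx (_ : (i.+1 == i) = false) ?eqxx //; apply/eqP; lia.
case: (x =P i.+1) => [->|hi1]; first by rewrite eqxx.
by move/eqP/negbTE: hi => ->; move/eqP/negbTE: hi1 => ->.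
Qed.

Lemma swv_inv i h v : swv i h (swv i h v) = v.
Proof. by case: v => x r; rewrite /swv /=; case: (r <= h)%N; rewrite ?sw_inv. Qed.

Lemma uniq_Arm alpha j r : (0 < r)%N -> uniq (Arm alpha j r).
Proof.
move=> r0; rewrite /Arm cat_uniq; apply/and3P; split.
- rewrite map_inj_uniq ?filter_uniq ?iota_uniq //; by move=> x y [].
- apply/hasPn => v /mapP [x _ ->]; apply/negP => /mapP [y _ [_]]; lia.
- rewrite map_inj_uniq ?filter_uniq ?iota_uniq //; by move=> x y [].
Qed.

Lemma acol_sw alpha i x : acol alpha i = acol alpha i.+1 -> acol alpha (sw i x) = acol alpha x.
Proof.
move=> e; rewrite /sw; case: (x =P i) => [->|_]; first by rewrite e.
by case: (x =P i.+1) => [->|_].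
Qed.

Lemma Arm_closed alpha i h j v : (1 <= i)%N -> (i < ncol alpha)%N ->
  acol alpha i = acol alpha i.+1 -> j != i -> j != i.+1 ->
  v \in Arm alpha j h.+1 -> swv i h v \in Arm alpha j h.+1.
Proof.
move=> i1 iN e ji ji1; rewrite /Arm !mem_cat => /orP [] /mapP [x].
  rewrite mem_filter mem_iota => /andP [/andP [ad lt] /andP [x1 xj]] -> /=.
  rewrite /swv /= leqnn; apply/orP; left; apply/mapP; exists (sw i x) => //.
  rewrite mem_filter mem_iota acol_sw // lt andbT.
  move: ad; rewrite /in_adg acol_sw //.
  move/eqP: ji; move/eqP: ji1; rewrite /sw.
  case: (x =P i) => xi; case: (x =P i.+1) => xi1; lia.
move=> xin -> /=; rewrite /swv /= ltnn; apply/orP; right; apply/mapP; exists x => //.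
Qed.

Lemma perm_swv alpha i h j : (1 <= i)%N -> (i < ncol alpha)%N ->
  acol alpha i = acol alpha i.+1 -> j != i -> j != i.+1 ->
  perm_eq (map (swv i h) (Arm alpha j h.+1)) (Arm alpha j h.+1).
Proof.
move=> i1 iN e ji ji1; apply: uniq_perm.
- rewrite map_inj_uniq ?uniq_Arm //; exact: can_inj (swv_inv i h).
- exact: uniq_Arm.
- move=> v; apply/mapP/idP => [[w wA ->]|vA]; first exact: Arm_closed.
  by exists (swv i h v); [exact: Arm_closed | rewrite swv_inv].
Qed.

Lemma sw_other i j : j != i -> j != i.+1 -> sw i j = j.
Proof. by rewrite /sw => /negbTE -> /negbTE ->. Qed.

Lemma W_other alpha i h T j : (1 <= i)%N -> (i < ncol alpha)%N ->
  acol alpha i = acol alpha i.+1 -> j != i -> j != i.+1 ->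
  W alpha (Omega i h T) h j = W alpha T h j.
Proof.
move=> i1 iN e ji ji1; rewrite /W !Omega_eq leqnn ltnn sw_other //.
congr (_ * tt ^+ _ * _).
transitivity (count (fun v : nat * nat => chi3 (T j h.+1) (T v.1 v.2) (T j h) != 1)
   (map (swv i h) (Arm alpha j h.+1))).
  rewrite count_map; apply: eq_count => v; rewrite Omega_eq /swv /=.
  by case: ifP.
by move/permP: (@perm_swv alpha i h j i1 iN e ji ji1) => ->.
Qed.

Lemma den_poly (R : nzRingType) (p : {poly R}) m : (0 < m)%N -> (1 - p * 'X^m) != 0.
Proof.
move=> m0; apply/eqP => /(congr1 (fun r : {poly R} => r`_0)).
rewrite coefB coef1 coefMXn m0 subr0 coef0 /= => /eqP; by rewrite oner_eq0.
Qed.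

Lemma den_neq0 n m : (0 < m)%N -> 1 - qq ^+ n * tt ^+ m != 0.
Proof.
move=> m0; rewrite /qq /tt -!tofracXn -tofracM -tofrac1 -tofracB tofrac_eq0.
exact: den_poly.
Qed.

Lemma ring_test (m1 m2 : nat) (x y : Qqt) : x ^+ m1 * y * x ^+ m2 = x ^+ (m1 + m2) * y.
Proof. rewrite exprD. ring. Qed.

Definition Pf l m : Qqt := (1 - tt) / (1 - qq ^+ (1 + l) * tt ^+ (1 + m)).
Definition Rf l A : Qqt := (1 - qq ^+ l.+1 * tt ^+ A.+1) / (1 - qq ^+ l.+1 * tt ^+ A.+2).

Lemma prodW (m1 m2 k1 k2 : nat) (F1 F2 : Qqt) :
  (qq ^+ m1 * tt ^+ k1 * F1) * (qq ^+ m2 * tt ^+ k2 * F2) = qq ^+ (m1 + m2) * tt ^+ (k1 + k2) * (F1 * F2).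
Proof. rewrite !exprD; ring. Qed.

Lemma fld0 (F: fieldType) (X t Q u : F) : 1 - Q*u != 0 -> 1 - Q*(t*u) != 0 ->
 X*((1-t)/(1-Q*u)) * (1 - t * ((1-Q*u)/(1-Q*(t*u)))) = X * ((1-t)/(1-Q*(t*u)) * ((1-t)/(1-Q*u))).
Proof. move=> d1 d2. field. by rewrite d1 d2. Qed.
Lemma fld1 (F: fieldType) (X t Q u : F) : 1 - Q*u != 0 -> 1 - Q*(t*u) != 0 ->
 X*((1-t)/(1-Q*u)) * (1 - ((1-Q*u)/(1-Q*(t*u)))) = X * Q * u * ((1-t)/(1-Q*(t*u)) * ((1-t)/(1-Q*u))).
Proof. move=> d1 d2. field. by rewrite d1 d2. Qed.

Lemma alg1g (F : fieldType) (q t : F) (M K m1 m2 k1 k2 l A : nat) (z : int) :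
  1 - q ^+ l.+1 * t ^+ A.+1 != 0 -> 1 - q ^+ l.+1 * t ^+ A.+2 != 0 ->
  (z = 0 /\ m1 + m2 = M /\ k1 + k2 = K)%N \/
  (z = 1 /\ m1 + m2 = M + l.+1 /\ k1 + k2 = K + A.+1)%N ->
  (q ^+ M * t ^+ K * ((1 - t) / (1 - q ^+ (1 + l) * t ^+ (1 + A)))) *
     (1 - t ^ (1 - z) * ((1 - q ^+ l.+1 * t ^+ A.+1) / (1 - q ^+ l.+1 * t ^+ A.+2))) =
  (q ^+ m1 * t ^+ k1 * ((1 - t) / (1 - q ^+ (1 + l) * t ^+ (1 + A.+1)))) *
  (q ^+ m2 * t ^+ k2 * ((1 - t) / (1 - q ^+ (1 + l) * t ^+ (1 + A)))).
Proof.
rewrite !add1n => d1 d2.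
have E : forall a b c d g h : F, (a * b * g) * (c * d * h) = (a * c) * (b * d) * (g * h).
  by move=> *; ring.
rewrite E -!exprD.
move: d1 d2; rewrite (exprS t A.+1).
set Q := q ^+ l.+1; set u := t ^+ A.+1 => d1 d2.
case=> [[-> [-> ->]]|[-> [-> ->]]].
  rewrite subr0 expr1z; exact: fld0.
rewrite subrr expr0z mul1r !exprD -/Q -/u.
have -> : q ^+ M * Q * (t ^+ K * u) = q ^+ M * t ^+ K * Q * u by ring.
exact: fld1.
Qed.

Definition Wb (x z l m : nat) (ys : seq nat) : Qqt :=
  qq ^+ (if (z < x)%N then l.+1 else 0) * tt ^+ count (fun y => chi3 x y z != 1) ys *
  (if x != z then (1 - tt) / (1 - qq ^+ (1 + l) * tt ^+ (1 + m)) else 1).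

Definition rhoL (a b c d l A : nat) : Qqt :=
  if (a == c) && (b == d) then 1
  else if b == c then 0
  else if b == d then 1
  else if a == c then
    tt ^ (1 - chi3 d a b) *
    ((1 - qq ^+ l.+1 * tt ^+ A.+1) / (1 - qq ^+ l.+1 * tt ^+ A.+2))
  else if chi3 c d a == chi3 c d b then 0 else 1.

Definition esum (ys : seq nat) x z : int := \sum_(y <- ys) (1 - chi3 x y z).

Lemma cnt_int ys x z : (forall y, y \in ys -> (y != x) && (y != z)) ->
  (count (fun y => chi3 x y z != 1) ys)%:Z = esum ys x z.
Proof.
rewrite /esum; elim: ys => [|y ys IH] H; first by rewrite big_nil.
rewrite big_cons /= PoszD IH; last by move=> w wi; apply: H; rewrite inE wi orbT.
have /andP [yx yz] := H y (mem_head _ _).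
by case/orP: (@chi3_01 x y z yx yz) => /eqP ->; rewrite /=; lia.
Qed.

Lemma key_sum ys x z w : (forall y, y \in ys -> y != z) ->
  esum ys x z + esum ys z w - esum ys x w = (size ys)%:Z * chi3 x z w.
Proof.
rewrite /esum; elim: ys => [|y ys IH] H; first by rewrite !big_nil /= mul0r addr0 subr0.
rewrite !big_cons /= -add1n PoszD mulrDl mul1r.
have := IH (fun v vi => H v (@mem_behead _ (y :: ys) v vi)).
have := @chi3_key x y z w (H y (mem_head _ _)).
move=> h1 h2; rewrite -h2 -h1; ring.
Qed.

Lemma cnt_cons (p : pred nat) ys1 d ys2 : count p (ys1 ++ d :: ys2) = (count p (ys1 ++ ys2) + p d)%N.
Proof. rewrite !count_cat /=; lia. Qed.

Lemma chi3_xyx x y : y != x -> chi3 x y x = 1.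
Proof. rewrite /chi3 /chi2 => ?; lia. Qed.

Lemma maj3 x y z l : ((if (z < y)%N then l.+1 else 0) + (if (y < x)%N then l.+1 else 0))%:Z =
  (if (z < x)%N then l.+1 else 0)%:Z + chi3 x y z * (l.+1)%:Z.
Proof.
rewrite /chi3 /chi2; case: (ltnP z y) => h1; case: (ltnP y x) => h2; case: (ltnP z x) => h3;
  rewrite /=; lia.
Qed.

Lemma chi3_swap x y z : x != y -> y != z -> x != z -> chi3 y x z = 1 - chi3 x y z.
Proof. rewrite /chi3 /chi2 => ? ? ?; lia. Qed.

Lemma ne1_nat (u : int) : (u == 0) || (u == 1) -> ((u != 1) : nat)%:Z = 1 - u.
Proof. by case/orP => /eqP ->. Qed.

Lemma local_main a b c d l A ys1 ys2 :
  a != b -> c != d -> a != d -> b != d -> a != c ->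
  (forall y, y \in ys1 ++ ys2 -> [&& y != a, y != b, y != c & y != d]) ->
  A = size (ys1 ++ ys2) ->
  Wb c b l A.+1 (ys1 ++ d :: ys2) * Wb d a l A (ys1 ++ ys2) * (1 - rhoL b a c d l A) =
  Wb c a l A.+1 (ys1 ++ d :: ys2) * Wb d b l A (ys1 ++ ys2) * (1 - rhoL a b c d l A).
Proof.
move=> ab cd ad bd ac Hy HA.
have ba := ab; rewrite eq_sym in ba. have dc := cd; rewrite eq_sym in dc.
have da := ad; rewrite eq_sym in da. have db := bd; rewrite eq_sym in db.
have ca := ac; rewrite eq_sym in ca.
rewrite /Wb !cnt_cons.
move: Hy HA; set ys := ys1 ++ ys2 => Hy HA.
have Hyx : forall x z, (forall y, y \in ys -> (y != x) && (y != z)) ->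
   (count (fun y => chi3 x y z != 1) ys)%:Z = esum ys x z.
  by move=> x z; apply: cnt_int.
case: (eqVneq b c) => [bc|bc].
  subst c.
  have c0 : count (fun y => chi3 b y b != 1) ys = 0%N.
    apply/eqP; rewrite -leqn0 -(count_pred0 ys) leq_eqVlt; apply/orP; left; apply/eqP.
    apply: eq_in_count => y /Hy /and4P [_ yb _ _]; by rewrite chi3_xyx ?eqxx.
  rewrite c0 /rhoL eqxx (negbTE ad) (negbTE ab) /= (@chi3_xyx b d db) eqxx /= ltnn.
  rewrite da db ba /= expr0 !mul1r subr0 mulr1.
  apply: alg1g; [exact: den_neq0|exact: den_neq0|].
  have z01 := @chi3_01 d b a bd ba.
  have h1 := Hyx d a (fun y yi => match and4P (Hy y yi) with And4 ya yb yc yd => introT andP (conj yd ya) end).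
  have h2 := Hyx b a (fun y yi => match and4P (Hy y yi) with And4 ya yb yc yd => introT andP (conj yb ya) end).
  have h3 := Hyx d b (fun y yi => match and4P (Hy y yi) with And4 ya yb yc yd => introT andP (conj yd yb) end).
  have k := @key_sum ys d b a (fun y yi => match and4P (Hy y yi) with And4 ya yb yc yd => yb end).
  have h4 := ne1_nat (chi3 b d a) (@chi3_01 b d a dc da).
  rewrite [in RHS](@chi3_swap d b a db ba da) in h4.
  have m := maj3 d b a l.
  rewrite -HA in k.
  case/orP: z01 => /eqP z; rewrite z in k h4 m; [left|right]; (split; [done|split]); lia.
have cb := bc; rewrite eq_sym in cb.
rewrite /rhoL (negbTE ac) (negbTE bd) (negbTE ad) /= da ca db /= (negbTE bc) /=.
case: (eqVneq (chi3 c d a) (chi3 c d b)) => e; last first.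
  by rewrite subrr !mulr0.
rewrite e subr0 !mulr1 !prodW.
have m1 := maj3 c b a l. have m2 := maj3 d b a l.
have e2 : chi3 c b a = chi3 d b a by move: e; rewrite /chi3 /chi2; lia.
have h1 := Hyx d a (fun y yi => match and4P (Hy y yi) with And4 ya yb yc yd => introT andP (conj yd ya) end).
have h2 := Hyx c a (fun y yi => match and4P (Hy y yi) with And4 ya yb yc yd => introT andP (conj yc ya) end).
have h3 := Hyx d b (fun y yi => match and4P (Hy y yi) with And4 ya yb yc yd => introT andP (conj yd yb) end).
have h5 := Hyx c b (fun y yi => match and4P (Hy y yi) with And4 ya yb yc yd => introT andP (conj yc yb) end).
have k1 := @key_sum ys d b a (fun y yi => match and4P (Hy y yi) with And4 ya yb yc yd => yb end).
have k2 := @key_sum ys c b a (fun y yi => match and4P (Hy y yi) with And4 ya yb yc yd => yb end).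
rewrite e2 in k2 m1.
congr (qq ^+ _ * tt ^+ _ * _); lia.
Qed.

Lemma local a b c d l A ys1 ys2 :
  a != b -> c != d -> a != d -> b != d ->
  (forall y, y \in ys1 ++ ys2 -> [&& y != a, y != b, y != c & y != d]) ->
  A = size (ys1 ++ ys2) ->
  Wb c b l A.+1 (ys1 ++ d :: ys2) * Wb d a l A (ys1 ++ ys2) * (1 - rhoL b a c d l A) =
  Wb c a l A.+1 (ys1 ++ d :: ys2) * Wb d b l A (ys1 ++ ys2) * (1 - rhoL a b c d l A).
Proof.
move=> ab cd ad bd Hy HA.
have [ac|ac] := eqVneq a c; last exact: local_main.
symmetry; apply: local_main => //; first by rewrite eq_sym.
  by rewrite -ac eq_sym.
by move=> y /Hy /and4P [-> -> -> ->].
Qed.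

Lemma W_Wb alpha T h j : W alpha T h j =
  Wb (T j h.+1) (T j h) (leg alpha j h.+1) (arm alpha j h.+1) [seq T v.1 v.2 | v <- Arm alpha j h.+1].
Proof. by rewrite /W /Wb count_map. Qed.

Lemma left_eq alpha i r : (1 <= i)%N -> acol alpha i = acol alpha i.+1 ->
  left_arm alpha i r = left_arm alpha i.+1 r.
Proof.
move=> i1 e; rewrite /left_arm /=.
have -> : iota 1 i = iota 1 i.-1 ++ [:: i].
  by case: i i1 {e} => // i' _; rewrite /= -(iotaD 1 i' 1) addn1.
by rewrite filter_cat /= -e ltnn andbF cats0.
Qed.

Lemma right_eq alpha i h : (i < ncol alpha)%N -> (h < acol alpha i.+1)%N ->
  acol alpha i = acol alpha i.+1 ->
  right_arm alpha i h.+1 = (i.+1, h.+1) :: right_arm alpha i.+1 h.+1.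
Proof.
move=> iN hl e; rewrite /right_arm e.
have -> : (ncol alpha - i = (ncol alpha - i.+1).+1)%N by lia.
rewrite /= ifT // leqnn andbT /in_dg; lia.
Qed.

Lemma left_vals alpha i h v : acol alpha i = acol alpha i.+1 ->
  v \in left_arm alpha i.+1 h.+1 -> [/\ v.2 = h, (1 <= v.1 < i)%N & in_adg alpha v.1 h].
Proof.
move=> e /mapP [x]; rewrite mem_filter mem_iota => /andP [/andP [ad lt] rng] -> /=.
split => //.
have : x != i by apply/eqP => xi; move: lt; rewrite xi e ltnn.
move: rng => /=; lia.
Qed.

Lemma right_vals alpha i h v :
  v \in right_arm alpha i.+1 h.+1 -> [/\ v.2 = h.+1, (i.+1 < v.1)%N & in_adg alpha v.1 h.+1].
Proof.
move=> /mapP [x]; rewrite mem_filter mem_iota => /andP [/andP [ad lt] rng] -> /=.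
split => //; first by move: rng; lia.
Qed.

Lemma NAne alpha T j1 r1 j2 r2 : nonattacking alpha T -> in_adg alpha j1 r1 -> in_adg alpha j2 r2 ->
  attack (j1, r1) (j2, r2) -> T j1 r1 != T j2 r2.
Proof. by move=> N a1 a2 ak; apply/eqP; apply: N. Qed.

Lemma row_split alpha i h : (1 <= i)%N -> (i < ncol alpha)%N -> (h < acol alpha i)%N ->
  acol alpha i = acol alpha i.+1 ->
  row_cols alpha h = [seq j <- iota 1 i.-1 | in_dg alpha j h.+1] ++ i :: i.+1 ::
                     [seq j <- iota i.+2 (ncol alpha - i.+1) | in_dg alpha j h.+1].
Proof.
move=> i1 iN hl e; rewrite /row_cols.
have E : ncol alpha = (i.-1 + (ncol alpha - i.+1).+2)%N by lia.
rewrite {1}E iotaD filter_cat add1n prednK //= !ifT //; rewrite /in_dg; lia.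
Qed.

Arguments left_eq {alpha i r}.
Arguments right_eq {alpha i h}.
Arguments left_vals {alpha i h v}.
Arguments right_vals {alpha i h v}.
Arguments NAne {alpha T j1 r1 j2 r2}.
Arguments row_split {alpha i h}.

Lemma rho_eq alpha i S h : (h < acol alpha i)%N -> rho alpha i S h =
  rhoL (S i h) (S i.+1 h) (S i h.+1) (S i.+1 h.+1) (leg alpha i.+1 h.+1) (arm alpha i.+1 h.+1).
Proof. by move=> hl; rewrite /rho leqNgt hl. Qed.

Lemma swi i : sw i i = i.+1. Proof. by rewrite /sw eqxx. Qed.
Lemma swi1 i : sw i i.+1 = i.
Proof. rewrite /sw (_ : (i.+1 == i) = false) ?eqxx //; apply/eqP; lia. Qed.

Theorem lemma3p11 (alpha sigma : seq nat) (i h : nat) (T : nat -> nat -> nat) :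
  is_perm (ncol alpha) sigma ->
  (1 <= i)%N -> (i < ncol alpha)%N ->
  acol alpha i = acol alpha i.+1 ->
  NAF alpha sigma T ->
  (h <= acol alpha i)%N ->
  NAF alpha (perm_si sigma i) (Omega i h T) ->
  wt alpha (Omega i h T) h * (1 - rho alpha i (Omega i h T) h)
  = wt alpha T h * (1 - rho alpha i T h).
Proof.
move=> _ i1 iN e [_ NT] hle [_ NU].
case: (ltngtP h (acol alpha i)) => [hlt|hgt|heq]; last first.
- have r0 : forall S, rho alpha i S h = 0 by move=> S; rewrite /rho heq leqnn.
  rewrite !r0 !wt_prod; congr (_ * _); apply: eq_big_seq => j.
  rewrite mem_filter => /andP [dg _]; apply: W_other => //; apply/eqP => ji;
    move: dg; rewrite /in_dg ji -?e -heq; lia.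
- by move: hle; rewrite leqNgt hgt.
rewrite !wt_prod (row_split i1 iN hlt e) !big_cat !big_cons /=.
set s1 := [seq j <- iota 1 i.-1 | _].
set s2 := [seq j <- iota i.+2 _ | _].
have E1 : \prod_(j <- s1) W alpha (Omega i h T) h j = \prod_(j <- s1) W alpha T h j.
  apply: eq_big_seq => j; rewrite mem_filter mem_iota => /andP [_ /andP [j1 ji]].
  by apply: W_other => //; apply/eqP; lia.
have E2 : \prod_(j <- s2) W alpha (Omega i h T) h j = \prod_(j <- s2) W alpha T h j.
  apply: eq_big_seq => j; rewrite mem_filter mem_iota => /andP [_ /andP [j1 ji]].
  by apply: W_other => //; apply/eqP; lia.
rewrite E1 E2.
set P1 := \prod_(j <- s1) W alpha T h j.
set P2 := \prod_(j <- s2) W alpha T h j.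
suff L : W alpha (Omega i h T) h i * W alpha (Omega i h T) h i.+1 * (1 - rho alpha i (Omega i h T) h)
       = W alpha T h i * W alpha T h i.+1 * (1 - rho alpha i T h).
  transitivity (P1 * P2 * (W alpha (Omega i h T) h i * W alpha (Omega i h T) h i.+1 *
                 (1 - rho alpha i (Omega i h T) h))); first by ring.
  by rewrite L; ring.
have hlt1 : (h < acol alpha i.+1)%N by rewrite -e.
have arm_i : arm alpha i h.+1 = (arm alpha i.+1 h.+1).+1.
  by rewrite /arm /Arm (left_eq i1 e) (right_eq iN hlt1 e) !size_cat /= addnS.
have leg_i : leg alpha i h.+1 = leg alpha i.+1 h.+1 by rewrite /leg e.
set ys1 := [seq T v.1 v.2 | v <- left_arm alpha i.+1 h.+1].
set ys2 := [seq T v.1 v.2 | v <- right_arm alpha i.+1 h.+1].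
have Ul : [seq Omega i h T v.1 v.2 | v <- left_arm alpha i.+1 h.+1] = ys1.
  apply/eq_in_map => v /(left_vals e) [v2 /andP [v1 vi] _].
  rewrite Omega_eq v2 leqnn sw_other //; first by rewrite ltn_eqF.
  by rewrite ltn_eqF // (ltn_trans vi (ltnSn i)).
have Ur : [seq Omega i h T v.1 v.2 | v <- right_arm alpha i.+1 h.+1] = ys2.
  apply/eq_in_map => v /right_vals [v2 _ _].
  by rewrite Omega_eq v2 ltnn.
have mTi : [seq T v.1 v.2 | v <- Arm alpha i h.+1] = ys1 ++ T i.+1 h.+1 :: ys2.
  by rewrite /Arm (left_eq i1 e) (right_eq iN hlt1 e) map_cat.
have mUi : [seq Omega i h T v.1 v.2 | v <- Arm alpha i h.+1] = ys1 ++ T i.+1 h.+1 :: ys2.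
  by rewrite /Arm (left_eq i1 e) (right_eq iN hlt1 e) map_cat /= Ul Ur Omega_eq ltnn.
have mTi1 : [seq T v.1 v.2 | v <- Arm alpha i.+1 h.+1] = ys1 ++ ys2 by rewrite /Arm map_cat.
have mUi1 : [seq Omega i h T v.1 v.2 | v <- Arm alpha i.+1 h.+1] = ys1 ++ ys2.
  by rewrite /Arm map_cat Ul Ur.
rewrite !W_Wb !rho_eq // arm_i leg_i mTi mUi mTi1 mUi1 !Omega_eq ltnn leqnn swi swi1.
have a1 : in_adg alpha i h by rewrite /in_adg; lia.
have a2 : in_adg alpha i.+1 h by rewrite /in_adg; lia.
have a3 : in_adg alpha i h.+1 by rewrite /in_adg; lia.
have a4 : in_adg alpha i.+1 h.+1 by rewrite /in_adg; lia.
apply: local.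
- by apply: (NAne NT a1 a2); rewrite /attack /=; lia.
- by apply: (NAne NT a3 a4); rewrite /attack /=; lia.
- by apply: (NAne NT a1 a4); rewrite /attack /=; lia.
- have := NAne NU a1 a4; rewrite !Omega_eq ltnn leqnn swi; apply; rewrite /attack /=; lia.
- move=> y; rewrite mem_cat => /orP [] /mapP [[x r] vin ->] /=.
    case: (left_vals e vin) => /= -> /andP [x1 xi] ax.
    apply/and4P; split; apply: (NAne NT ax) => //; rewrite /attack /=; lia.
  case: (right_vals vin) => /= -> xi ax.
  apply/and4P; split; apply: (NAne NT ax) => //; rewrite /attack /=; lia.
- by rewrite /arm -mTi1 size_map.
Qed.
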